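(* Under the setting of the MERL algorithm with true environment $\mu\in\mathcal M$, with $P_{\mu,\pi}$-probability at least $1-\delta/4$ we have $\mu\in\mathcal M_t$ for all time steps $t$.
   Context: Setting. $A$, $O$ are finite sets of actions and observations and $R\subset[0,1]$ a finite set of rewards. A history is a finite sequence of action/observation/reward triples; $\ell(h)$ is its length. An environment $\nu$ is a family of conditional distributions over the next (observation, reward) pair given the history and action. A policy maps finite histories to actions; policy and environment $\nu$ induce a measure $P_{\nu,\pi}$ on infinite histories. Fix $\gamma\in(0,1)$. For a history $h$ of length $t$, $V^\pi_\nu(h;d'):=\mathbf E_{\nu,\pi}[\sum_{k=0}^{d'-1}\gamma^kr_{t+1+k}\mid h]$, $V^\pi_\nu(h):=\lim_{d'\to\infty}V^\pi_\nu(h;d')$; $\pi^*_\nu$ is a fixed optimal policy for $\nu$ and $V^*_\nu:=V^{\pi^*_\nu}_\nu$. Logarithms are natural. $\mathcal M=\{\nu_1,\dots,\nu_N\}$, $\epsilon\in(0,1]$, $\delta\in(0,1)$. Constants. $d:=\lceil\frac1{1-\gamma}\log\frac{8}{(1-\gamma)\epsilon}\rceil$; $\mathcal K:=\{0,1,\dots,\lceil\log_2\frac1{\epsilon(1-\gamma)}\rceil+2\}$; $\delta_1:=\frac{\delta}{32|\mathcal K|N^{3/2}}$; $\alpha:=\frac{4\sqrt N}{4\sqrt N-1}$, $\alpha_j:=\lceil\alpha^j\rceil$. MERL algorithm. It maintains $\mathcal M_t\subseteq\mathcal M$ (initially $\mathcal M$), counters $E(\nu,\kappa)$ (initially 0)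 and statistics $X(\nu,\kappa)_i$. At each time $t$ not inside an ongoing exploration phase, with history $h$: with $\Pi:=\{\pi^*_\nu:\nu\in\mathcal M_t\}$, choose $\overline\nu,\underline\nu\in\mathcal M_t$, $\pi'\in\Pi$ maximizing $V^{\pi'}_{\overline\nu}(h;d)-V^{\pi'}_{\underline\nu}(h;d)=: \Delta$. If $\Delta>\epsilon/4$, an exploration phase starts: follow $\pi'$ for $d$ steps, with return $R=\sum_{j=0}^{d-1}\gamma^jr_{t+1+j}$; with $\kappa:=\min\{\kappa\in\mathbb N:\Delta>\epsilon2^{\kappa-2}\}$ increment $E(\overline\nu,\kappa),E(\underline\nu,\kappa)$ and record $X(\overline\nu,\kappa)_{E(\overline\nu,\kappa)}:=(1-\gamma)(V^{\pi'}_{\overline\nu}(h;d)-R)$, $X(\underline\nu,\kappa)_{E(\underline\nu,\kappa)}:=(1-\gamma)(R-V^{\pi'}_{\underline\nu}(h;d))$. Otherwise take one action $\pi^*_{\nu_i}(h)$ with $i$ minimal such that $\nu_i\in\mathcal M_t$. Whenever some $\nu\in\mathcal M_t$, $\kappa$, $j\in\mathbb N$ satisfy $E(\nu,\kappa)=\alpha_j$ and $\sum_{i=1}^{E(\nu,\kappa)}X(\nu,\kappa)_i\ge\sqrt{2E(\nu,\kappa)\log(E(\nu,\kappa)/\delta_1)}$, $\nu$ is removed. $\pi$ denotes MERL's policy and probabilities are w.r.t. $P_{\mu,\pi}$. *)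

(* Defs.v *)
From Stdlib Require Import Reals Lra List ClassicalEpsilon.
Import ListNotations.
Open Scope R_scope.

Definition sumL {X : Type} (l : list X) (f : X -> R) : R :=
  fold_right (fun x acc => f x + acc) 0 l.

Definition Rceil (x : R) : Z :=
  let z := up x in
  if Req_EM_T (IZR z - 1) x then (z - 1)%Z else z.

Definition log2 (x : R) : R := ln x / ln 2.

Section MERL.
Context {A Ob Rw : Type}.
Context (eO : list Ob) (eR : list Rw) (rv : Rw -> R) (gamma : R).

(* histories: action/observation/reward triples, oldest first *)
Definition hist := list (A * Ob * Rw).
(* environment: conditional probability of (o, r) given history and action *)
Definition env := hist -> A -> Ob -> Rw -> R.
Definition policy := hist -> A.

Definition is_env (nu : env) : Prop :=
  forall h a, (forall o r, 0 <= nu h a o r) /\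
              sumL eO (fun o => sumL eR (fun r => nu h a o r)) = 1.

(* V^pi_nu(h; d) = E_{nu,pi}[ sum_{k<d} gamma^k r_{t+1+k} | h ] *)
Fixpoint Vd (nu : env) (pi : policy) (h : hist) (d : nat) : R :=
  match d with
  | O => 0
  | S d' => let a := pi h in
      sumL eO (fun o => sumL eR (fun r =>
        nu h a o r * (rv r + gamma * Vd nu pi (h ++ [(a, o, r)]) d')))
  end.

(* pis is optimal for nu: V^pi_nu(h) <= V^pis_nu(h) for all pi, h,
   where V(h) = lim_{d -> oo} V(h; d) *)
Definition is_optimal (nu : env) (pis : policy) : Prop :=
  forall (pi : policy) (h : hist) (l1 l2 : R),
    Un_cv (fun d => Vd nu pi h d) l1 ->
    Un_cv (fun d => Vd nu pis h d) l2 -> l1 <= l2.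

Context (envs : list env) (ps : nat -> policy) (eps delta : R)
        (sel : hist -> list nat -> nat * nat * nat).

Definition Nenv : nat := length envs.
Definition nuI (i : nat) : env := nth i envs (fun _ _ _ _ => 0).

Definition dconst : nat :=
  Z.to_nat (Rceil (/ (1 - gamma) * ln (8 / ((1 - gamma) * eps)))).
(* |K| where K = {0, ..., ceil(log2 (1/(eps(1-gamma)))) + 2} *)
Definition Kcard : nat :=
  (Z.to_nat (Rceil (log2 (/ (eps * (1 - gamma))))) + 3)%nat.
Definition delta1 : R :=
  delta / (32 * INR Kcard * (INR Nenv * sqrt (INR Nenv))).
Definition alpha : R := 4 * sqrt (INR Nenv) / (4 * sqrt (INR Nenv) - 1).
Definition alpha_j (j : nat) : Z := Rceil (alpha ^ j).

Definition DeltaV (h : hist) (i j k : nat) : R :=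
  Vd (nuI i) (ps k) h dconst - Vd (nuI j) (ps k) h dconst.

(* kappa := min { kappa in N : DeltaV > eps 2^(kappa-2) } (searched in K) *)
Fixpoint kfind (D : R) (n fuel : nat) : nat :=
  match fuel with
  | O => n
  | S f => if Rlt_dec (eps * 2 ^ n / 4) D then n else kfind D (S n) f
  end.
Definition kappa_of (D : R) : nat := kfind D 0 Kcard.

Record phase := mkPhase {
  ph_k : nat;     (* index of the policy pi' = pi*_{nu_k} followed *)
  ph_hi : nat;
  ph_lo : nat;
  ph_kap : nat;
  ph_Vhi : R;     (* V^{pi'}_{overline nu}(h;d) at start *)
  ph_Vlo : R;     (* V^{pi'}_{underline nu}(h;d) at start *)
  ph_ret : R;
  ph_step : nat
}.

Record mstate := mkState {
  ms_M : list nat;                 (* indices of M_t *)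
  ms_E : nat -> nat -> nat;
  ms_X : nat -> nat -> list R;
  ms_ph : option phase
}.

Definition init_state : mstate :=
  mkState (seq 0 Nenv) (fun _ _ => 0%nat) (fun _ _ => []) None.

Definition decide (s : mstate) (h : hist) : A * mstate :=
  match ms_ph s with
  | Some p => (ps (ph_k p) h, s)
  | None =>
      let '(i, j, k) := sel h (ms_M s) in
      let D := DeltaV h i j k in
      if Rlt_dec (eps / 4) D then
        (ps k h, mkState (ms_M s) (ms_E s) (ms_X s)
                   (Some (mkPhase k i j (kappa_of D)
                            (Vd (nuI i) (ps k) h dconst)
                            (Vd (nuI j) (ps k) h dconst) 0 0)))
      else (ps (hd 0%nat (ms_M s)) h, s)
  end.

Definition incrE (E : nat -> nat -> nat) (i kap : nat) : nat -> nat -> nat :=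
  fun v k => if (Nat.eqb v i && Nat.eqb k kap)%bool then S (E v k) else E v k.
Definition addX (X : nat -> nat -> list R) (i kap : nat) (x : R)
  : nat -> nat -> list R :=
  fun v k => if (Nat.eqb v i && Nat.eqb k kap)%bool then X v k ++ [x] else X v k.

Definition remove_cond (E : nat -> nat -> nat) (X : nat -> nat -> list R)
  (v : nat) : bool :=
  if excluded_middle_informative
       (exists kap j : nat, Z.of_nat (E v kap) = alpha_j j /\
          sqrt (2 * INR (E v kap) * ln (INR (E v kap) / delta1))
            <= sumL (X v kap) (fun x => x))
  then true else false.

Definition update (s : mstate) (r : Rw) : mstate :=
  match ms_ph s with
  | None => s
  | Some p =>
      let ret := ph_ret p + gamma ^ (ph_step p) * rv r in
      let st := S (ph_step p) in
      if Nat.eqb st dconst then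
        let kap := ph_kap p in
        let E1 := incrE (incrE (ms_E s) (ph_hi p) kap) (ph_lo p) kap in
        let X1 := addX (addX (ms_X s) (ph_hi p) kap
                          ((1 - gamma) * (ph_Vhi p - ret)))
                       (ph_lo p) kap ((1 - gamma) * (ret - ph_Vlo p)) in
        mkState (filter (fun v => negb (remove_cond E1 X1 v)) (ms_M s))
                E1 X1 None
      else
        mkState (ms_M s) (ms_E s) (ms_X s)
          (Some (mkPhase (ph_k p) (ph_hi p) (ph_lo p) (ph_kap p)
                   (ph_Vhi p) (ph_Vlo p) ret st))
  end.

Definition step (acc : hist * mstate) (x : A * Ob * Rw) : hist * mstate :=
  let '(pre, s) := acc in
  let '(_, s1) := decide s pre in
  let '(_, _, r) := x in
  (pre ++ [x], update s1 r).

Definition merl_state (h : hist) : mstate :=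
  snd (fold_left step h ([], init_state)).

Definition merl_policy : policy := fun h => fst (decide (merl_state h) h).

Definition in_M (m : nat) (h : hist) : bool :=
  existsb (Nat.eqb m) (ms_M (merl_state h)).

(* P_{mu,pi}( nu_m in M_s for all s <= t (further steps) | h ) *)
Fixpoint Pstay (mu : env) (m : nat) (h : hist) (n : nat) : R :=
  if in_M m h then
    match n with
    | O => 1
    | S n' => let a := merl_policy h in
        sumL eO (fun o => sumL eR (fun r =>
          mu h a o r * Pstay mu m (h ++ [(a, o, r)]) n'))
    end
  else 0.

End MERL.

(* Main.v *)
From Coquelicot Require Import Coquelicot.
Require Import Defs.
From Stdlib Require Import Reals List Lra Lia ZArith ClassicalEpsilon.
Import ListNotations.
Open Scope R_scope.



Lemma exp_chord a b c : a < b -> b < c ->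
  (c - a) * exp b <= (c - b) * exp a + (b - a) * exp c.
Proof.
  intros hab hbc.
  destruct (MVT_cor2 exp exp a b hab (fun c _ => derivable_pt_lim_exp c)) as [c1 [e1 h1]].
  destruct (MVT_cor2 exp exp b c hbc (fun c _ => derivable_pt_lim_exp c)) as [c2 [e2 h2]].
  assert (exp c1 <= exp c2) by (apply Rlt_le, exp_increasing; lra).
  assert (0 <= (b - a) * (c - b) * (exp c2 - exp c1)).
  { apply Rmult_le_pos; [apply Rmult_le_pos|]; lra. }
  replace (exp a) with (exp b - exp c1 * (b - a)) by lra.
  replace (exp c) with (exp b + exp c2 * (c - b)) by lra.
  nra.
Qed.

Lemma hoeff_pt lam x : 0 <= lam -> -1 <= x <= 1 ->
  exp (lam * x) <= cosh lam + x * sinh lam.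
Proof.
  intros hl hx. unfold cosh, sinh.
  destruct (Req_dec lam 0) as [->|hl0].
  { rewrite Rmult_0_l, Ropp_0, exp_0. lra. }
  destruct (Req_dec x 1) as [->|hx1].
  { rewrite Rmult_1_r. lra. }
  destruct (Req_dec x (-1)) as [->|hx2].
  { replace (lam * -1) with (- lam) by ring. lra. }
  assert (h := exp_chord (- lam) (lam * x) lam ltac:(nra) ltac:(nra)).
  assert (hp : 0 < lam) by lra.
  apply Rmult_le_reg_l with (2 * lam); [lra|].
  replace (2 * lam * ((exp lam + exp (- lam)) / 2 + x * ((exp lam - exp (- lam)) / 2)))
    with ((lam - lam * x) * exp (- lam) + (lam * x - - lam) * exp lam) by field.
  replace (2 * lam * exp (lam * x)) with ((lam - - lam) * exp (lam * x)) by ring.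
  exact h.
Qed.

Lemma K_nonneg x : 0 <= x -> sinh x <= x * cosh x.
Proof.
  intros hx. destruct (Req_dec x 0) as [->|hx0].
  { unfold sinh. rewrite Ropp_0, exp_0. lra. }
  destruct (MVT_cor2 (fun x => x * cosh x - sinh x) (fun x => x * sinh x) 0 x ltac:(lra))
    as [c [e hc]].
  { intros c _. apply is_derive_Reals. unfold cosh, sinh. auto_derive; auto. field. }
  assert (0 <= sinh c).
  { unfold sinh. assert (exp (- c) < exp c) by (apply exp_increasing; lra). lra. }
  assert (hs0 : sinh 0 = 0) by (unfold sinh; rewrite Ropp_0; lra).
  rewrite hs0, Rmult_0_l in e.
  assert (0 <= c * sinh c * x) by (apply Rmult_le_pos; [apply Rmult_le_pos|]; lra).
  lra.
Qed.

Lemma cosh_le lam : 0 <= lam -> cosh lam <= exp (lam ^ 2 / 2).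
Proof.
  intros hl. destruct (Req_dec lam 0) as [->|hl0].
  { rewrite cosh_0. replace (0 ^ 2 / 2) with 0 by field. rewrite exp_0. lra. }
  destruct (MVT_cor2 (fun x => cosh x * exp (- (x ^ 2 / 2)))
              (fun x => (sinh x - x * cosh x) * exp (- (x ^ 2 / 2))) 0 lam ltac:(lra))
    as [c [e hc]].
  { intros c _. apply is_derive_Reals. unfold cosh, sinh. auto_derive; auto. replace (c * (c * 1) * / 2) with (c^2/2) by field. field. }
  assert (sinh c - c * cosh c <= 0) by (pose proof (K_nonneg c); lra).
  assert (0 < exp (- (c ^ 2 / 2))) by apply exp_pos.
  rewrite cosh_0 in e. replace (- (0 ^ 2 / 2)) with 0 in e by field. rewrite exp_0 in e.
  assert (0 <= (c * cosh c - sinh c) * exp (- (c ^ 2 / 2)) * lam)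
    by (apply Rmult_le_pos; [apply Rmult_le_pos|]; lra).
  assert (hle : cosh lam * exp (- (lam ^ 2 / 2)) <= 1) by nra.
  assert (exp (lam ^ 2 / 2) * exp (- (lam ^ 2 / 2)) = 1).
  { rewrite <- exp_plus. replace (lam ^ 2 / 2 + - (lam ^ 2 / 2)) with 0 by ring. apply exp_0. }
  assert (0 < exp (- (lam ^ 2 / 2))) by apply exp_pos.
  nra.
Qed.

Section SumL.
Context {X : Type}.
Lemma sumL_ext (l : list X) f g : (forall x, In x l -> f x = g x) -> sumL l f = sumL l g.
Proof. induction l; simpl; intros H; auto. rewrite H, IHl; auto. Qed.
Lemma sumL_le (l : list X) f g : (forall x, In x l -> f x <= g x) -> sumL l f <= sumL l g.
Proof. induction l; simpl; intros H. lra. pose proof (H a (or_introl eq_refl)). pose proof (IHl (fun x h => H x (or_intror h))). lra. Qed.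
Lemma sumL_nonneg (l : list X) f : (forall x, In x l -> 0 <= f x) -> 0 <= sumL l f.
Proof. induction l; simpl; intros H. lra. pose proof (H a (or_introl eq_refl)). pose proof (IHl (fun x h => H x (or_intror h))). lra. Qed.
Lemma sumL_0 (l : list X) : sumL l (fun _ => 0) = 0.
Proof. induction l; simpl; auto. rewrite IHl; ring. Qed.
Lemma sumL_affine (l : list X) f g (a b : R) :
  sumL l (fun x => a * f x + b * g x) = a * sumL l f + b * sumL l g.
Proof. induction l; simpl. ring. rewrite IHl. ring. Qed.
Lemma sumL_scal (l : list X) f (a : R) : sumL l (fun x => a * f x) = a * sumL l f.
Proof. induction l; simpl. ring. rewrite IHl. ring. Qed.
Lemma sumL_plus (l : list X) f g : sumL l (fun x => f x + g x) = sumL l f + sumL l g.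
Proof. induction l; simpl. ring. rewrite IHl. ring. Qed.
Lemma sumL_ge_term (l : list X) f x : (forall y, In y l -> 0 <= f y) -> In x l -> f x <= sumL l f.
Proof. induction l; simpl; intros H Hx. destruct Hx.
  destruct Hx as [<-|Hx].
  - pose proof (sumL_nonneg l f (fun y h => H y (or_intror h))). lra.
  - pose proof (H a (or_introl eq_refl)). pose proof (IHl (fun y h => H y (or_intror h)) Hx). lra.
Qed.
End SumL.

Lemma sumL_swap {X Y : Type} (l1 : list X) (l2 : list Y) (f : X -> Y -> R) :
  sumL l1 (fun x => sumL l2 (fun y => f x y)) = sumL l2 (fun y => sumL l1 (fun x => f x y)).
Proof.
  induction l1; simpl. rewrite sumL_0. auto.
  rewrite IHl1. rewrite <- sumL_plus. auto.
Qed.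

Section Gen.
Context {A Ob Rw : Type} (eO : list Ob) (eR : list Rw) (rv : Rw -> R) (gamma : R).
Hypothesis hg : 0 < gamma < 1.
Hypothesis hrv : forall r, 0 <= rv r <= 1.

Definition E2 (nu : @env A Ob Rw) (h : @hist A Ob Rw) (a : A) (F : Ob -> Rw -> R) : R :=
  sumL eO (fun o => sumL eR (fun r => nu h a o r * F o r)).

Lemma E2_le nu h a F G : is_env eO eR nu -> (forall o r, F o r <= G o r) -> E2 nu h a F <= E2 nu h a G.
Proof.
  intros He H. unfold E2. apply sumL_le; intros o _. apply sumL_le; intros r _.
  destruct (He h a) as [Hn _]. apply Rmult_le_compat_l; auto.
Qed.
Lemma E2_nonneg nu h a F : is_env eO eR nu -> (forall o r, 0 <= F o r) -> 0 <= E2 nu h a F.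
Proof.
  intros He H. unfold E2. apply sumL_nonneg; intros o _. apply sumL_nonneg; intros r _.
  destruct (He h a) as [Hn _]. apply Rmult_le_pos; auto.
Qed.
Lemma E2_ext nu h a F G : (forall o r, F o r = G o r) -> E2 nu h a F = E2 nu h a G.
Proof. intros H. unfold E2. apply sumL_ext; intros o _. apply sumL_ext; intros r _. rewrite H; auto. Qed.
Lemma E2_affine nu h a F (c0 c1 : R) : is_env eO eR nu ->
  E2 nu h a (fun o r => c0 + c1 * F o r) = c0 + c1 * E2 nu h a F.
Proof.
  intros He. destruct (He h a) as [_ H1]. unfold E2.
  transitivity (sumL eO (fun o => c0 * sumL eR (fun r => nu h a o r) + c1 * sumL eR (fun r => nu h a o r * F o r))).
  - apply sumL_ext; intros o _. rewrite <- sumL_affine. apply sumL_ext; intros r _. ring.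
  - rewrite sumL_affine. rewrite H1. ring.
Qed.
Lemma E2_const nu h a c : is_env eO eR nu -> E2 nu h a (fun _ _ => c) = c.
Proof.
  intros He. rewrite (E2_ext _ _ _ _ (fun o r => c + 0 * 0)) by (intros; ring).
  rewrite E2_affine by auto. ring.
Qed.

Lemma Vd_unfold nu pol h n :
  Vd eO eR rv gamma nu pol h (S n) =
  E2 nu h (pol h) (fun o r => rv r + gamma * Vd eO eR rv gamma nu pol (h ++ [(pol h, o, r)]) n).
Proof. reflexivity. Qed.

Lemma geo_step n : (1 - gamma ^ n) / (1 - gamma) + gamma ^ n = (1 - gamma ^ S n) / (1 - gamma).
Proof. simpl. field. lra. Qed.

Lemma pow_le1 n : gamma ^ n <= 1.
Proof. induction n; simpl. lra. nra. Qed.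

Lemma geo_bounds n : 0 <= (1 - gamma ^ n) / (1 - gamma) /\ (1 - gamma) * ((1 - gamma ^ n) / (1 - gamma)) = 1 - gamma ^ n.
Proof.
  assert (0 < gamma ^ n) by (apply pow_lt; lra). pose proof (pow_le1 n).
  split. apply Rmult_le_pos. lra. apply Rlt_le, Rinv_0_lt_compat. lra. field. lra.
Qed.

Lemma Vd_bounds (nu : @env A Ob Rw) (pol : @policy A Ob Rw) h n : is_env eO eR nu ->
  0 <= Vd eO eR rv gamma nu pol h n <= (1 - gamma ^ n) / (1 - gamma).
Proof.
  intros He. revert h. induction n; intros h.
  - simpl. split. lra. replace (1 - 1) with 0 by ring. unfold Rdiv; rewrite Rmult_0_l; lra.
  - rewrite Vd_unfold. split.
    + apply E2_nonneg; auto. intros o r. pose proof (hrv r). pose proof (IHn (h ++ [(pol h, o, r)])). nra.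
    + rewrite <- (E2_const nu h (pol h) ((1 - gamma ^ S n) / (1 - gamma))) by auto.
      apply E2_le; auto. intros o r. pose proof (hrv r). pose proof (IHn (h ++ [(pol h, o, r)])).
      replace ((1 - gamma ^ S n) / (1 - gamma)) with (1 + gamma * ((1 - gamma ^ n) / (1 - gamma)))
        by (simpl; field; lra). nra.
Qed.

Fixpoint W (nu : @env A Ob Rw) (pol : @policy A Ob Rw) (sg V lam : R) (h : @hist A Ob Rw) (fuel st : nat) (ret : R) : R :=
  match fuel with
  | O => exp (lam * (sg * ((1 - gamma) * (V - ret))))
  | S f => E2 nu h (pol h) (fun o r =>
      W nu pol sg V lam (h ++ [(pol h, o, r)]) f (S st) (ret + gamma ^ st * rv r))
  end.

Lemma W_nonneg nu pol sg V lam h fuel st ret : is_env eO eR nu -> 0 <= W nu pol sg V lam h fuel st ret.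
Proof.
  intros He. revert h st ret. induction fuel; intros h st ret; simpl.
  - apply Rlt_le, exp_pos.
  - apply E2_nonneg; auto.
Qed.

Lemma W_bound nu pol sg V lam h fuel st ret : is_env eO eR nu -> 0 <= lam -> (sg = 1 \/ sg = -1) ->
  0 <= V <= (1 - gamma ^ (st + fuel)) / (1 - gamma) ->
  0 <= ret <= (1 - gamma ^ st) / (1 - gamma) ->
  W nu pol sg V lam h fuel st ret <=
  cosh lam + sinh lam * (sg * ((1 - gamma) * (V - ret - gamma ^ st * Vd eO eR rv gamma nu pol h fuel))).
Proof.
  intros He hl hsg. revert h st ret. induction fuel; intros h st ret hV hret.
  - simpl. rewrite Nat.add_0_r in hV. rewrite Rmult_0_r, Rminus_0_r.
    rewrite (Rmult_comm (sinh lam)). apply hoeff_pt; auto.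
    destruct (geo_bounds st) as [_ Hb].
    assert (0 < gamma ^ st) by (apply pow_lt; lra).
    assert (-1 <= (1 - gamma) * (V - ret) <= 1) by nra.
    destruct hsg as [-> | ->]; lra.
  - simpl W. rewrite Vd_unfold.
    eapply Rle_trans.
    { apply E2_le; auto. intros o r. apply IHfuel.
      - replace (S st + fuel)%nat with (st + S fuel)%nat by lia. exact hV.
      - pose proof (hrv r). rewrite <- geo_step.
        assert (0 < gamma ^ st) by (apply pow_lt; lra). nra. }
    rewrite (E2_ext _ _ _ _ (fun o r => (cosh lam + sinh lam * (sg * ((1 - gamma) * (V - ret)))) +
          (- (sinh lam * sg * (1 - gamma) * gamma ^ st)) *
          (rv r + gamma * Vd eO eR rv gamma nu pol (h ++ [(pol h, o, r)]) fuel))).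
    2: { intros o r. simpl. ring. }
    rewrite E2_affine by auto. apply Req_le. ring.
Qed.
End Gen.
Section Merl.
Context {A Ob Rw : Type} (eO : list Ob) (eR : list Rw) (rv : Rw -> R) (gamma eps delta : R)
  (envs : list (@env A Ob Rw)) (ps : nat -> @policy A Ob Rw)
  (sel : @hist A Ob Rw -> list nat -> nat * nat * nat) (m : nat).
Hypothesis hg : 0 < gamma < 1.
Hypothesis heps : 0 < eps <= 1.
Hypothesis hdelta : 0 < delta < 1.
Hypothesis hrv : forall r, 0 <= rv r <= 1.
Hypothesis hm : (m < length envs)%nat.
Hypothesis hmu : is_env eO eR (nuI envs m).

Local Notation mu := (nuI envs m).
Local Notation MS := (merl_state eO eR rv gamma envs ps eps delta sel).
Local Notation DEC := (decide eO eR rv gamma envs ps eps sel).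
Local Notation UPD := (update rv gamma envs eps delta).
Local Notation d := (dconst gamma eps).
Local Notation Kc := (Kcard gamma eps).
Local Notation STEP := (step eO eR rv gamma envs ps eps delta sel).

Lemma fold_state h : fold_left STEP h ([], init_state envs) = (h, MS h).
Proof.
  induction h as [|x h IH] using rev_ind. reflexivity.
  unfold merl_state. rewrite !fold_left_app. rewrite IH. simpl.
  destruct (DEC (MS h) h) as [a0 s0]. destruct x as [[a o] r]. reflexivity.
Qed.

Lemma MS_snoc h a o r : MS (h ++ [(a, o, r)]) = UPD (snd (DEC (MS h) h)) r.
Proof.
  unfold merl_state at 1. rewrite fold_left_app, fold_state. simpl.
  destruct (DEC (MS h) h) as [a0 s0]. reflexivity.
Qed.

Lemma Rceil_ge x : x <= IZR (Rceil x).
Proof.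
  unfold Rceil. destruct (archimed x) as [H1 H2].
  destruct (Req_EM_T (IZR (up x) - 1) x) as [e|e].
  - rewrite minus_IZR. simpl. lra.
  - lra.
Qed.

Lemma Rceil_pos x : 0 < x -> (1 <= Rceil x)%Z.
Proof.
  intros H. pose proof (Rceil_ge x). assert (0 < IZR (Rceil x)) by lra.
  apply lt_IZR in H1. lia.
Qed.

Lemma d_pos : (0 < d)%nat.
Proof.
  unfold dconst. enough (1 <= Rceil (/ (1 - gamma) * ln (8 / ((1 - gamma) * eps))))%Z by lia.
  apply Rceil_pos. apply Rmult_lt_0_compat. apply Rinv_0_lt_compat; lra.
  rewrite <- ln_1. apply ln_increasing. lra.
  assert (0 < (1 - gamma) * eps <= 1) by (split; nra).
  apply Rlt_le_trans with 8. lra.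
  unfold Rdiv. rewrite <- (Rmult_1_r 8) at 1. apply Rmult_le_compat_l. lra.
  rewrite <- Rinv_1. apply Rinv_le_contravar; lra.
Qed.

Lemma kfind_le D n f : (kfind eps D n f <= n + f)%nat.
Proof. revert n. induction f; intros n; simpl. lia. destruct Rlt_dec. lia. specialize (IHf (S n)). lia. Qed.

Lemma kappa_le D : (kappa_of gamma eps D <= Kc)%nat.
Proof. unfold kappa_of. pose proof (kfind_le D 0 Kc). lia. Qed.

Definition Inv (s : mstate) (n : nat) : Prop :=
  (forall v k, ms_E s v k = length (ms_X s v k)) /\
  (forall v k, (0 < length (ms_X s v k))%nat -> (k <= Kc)%nat) /\
  (forall v k, (length (ms_X s v k) <= 2 * n)%nat) /\
  (forall p, ms_ph s = Some p -> ph_hi p <> ph_lo p /\ (ph_step p < d)%nat /\ (ph_kap p <= Kc)%nat).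

Lemma DeltaV_same h i k : DeltaV eO eR rv gamma envs ps eps h i i k = 0.
Proof. unfold DeltaV. ring. Qed.

Lemma Inv_decide s n h : Inv s n -> Inv (snd (DEC s h)) n.
Proof.
  intros HI. unfold decide.
  destruct (ms_ph s) as [p|] eqn:Hp. { simpl. exact HI. }
  destruct HI as [I1 [I2 [I3 I4]]].
  destruct (sel h (ms_M s)) as [[i j] k].
  destruct (Rlt_dec (eps / 4) (DeltaV eO eR rv gamma envs ps eps h i j k)) as [Hl|Hl].
  - simpl. refine (conj I1 (conj I2 (conj I3 _))). intros p' E. injection E as <-. simpl. split; [|split].
    + intros ->. rewrite DeltaV_same in Hl. lra.
    + apply d_pos.
    + apply kappa_le.
  - simpl. exact (conj I1 (conj I2 (conj I3 I4))).
Qed.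

Lemma incrE_addX E X i kap x v k : (forall v k, E v k = length (X v k)) ->
  incrE E i kap v k = length (addX X i kap x v k).
Proof.
  intros H. unfold incrE, addX. destruct (Nat.eqb v i && Nat.eqb k kap)%bool.
  rewrite length_app, H. simpl. lia. auto.
Qed.

Lemma addX_len X i kap x v k :
  length (addX X i kap x v k) = (length (X v k) + (if (Nat.eqb v i && Nat.eqb k kap)%bool then 1 else 0))%nat.
Proof. unfold addX. destruct (Nat.eqb v i && Nat.eqb k kap)%bool. rewrite length_app. simpl. lia. lia. Qed.

Lemma Inv_update s n r : Inv s n -> Inv (UPD s r) (S n).
Proof.
  intros [I1 [I2 [I3 I4]]]. unfold update.
  destruct (ms_ph s) as [p|] eqn:Hp.
  2: { refine (conj I1 (conj I2 (conj _ _))). intros v k. specialize (I3 v k). lia. intros p E; rewrite Hp in E; discriminate. }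
  destruct (I4 p eq_refl) as [J1 [J2 J3]].
  destruct (Nat.eqb (S (ph_step p)) d) eqn:He.
  - simpl. split; [|split; [|split]].
    + intros v k. apply incrE_addX. intros v' k'. apply incrE_addX. auto.
    + intros v k. cbn [ms_X]. rewrite !addX_len. intros Hl.
      destruct (Nat.eqb k (ph_kap p)) eqn:Ek.
      * apply Nat.eqb_eq in Ek. subst. auto.
      * rewrite !Bool.andb_false_r in Hl. rewrite !Nat.add_0_r in Hl. eauto.
    + intros v k. cbn [ms_X]. rewrite !addX_len. specialize (I3 v k).
      repeat match goal with |- context [if ?b then _ else _] => destruct b end; lia.
    + intros p' E; discriminate.
  - simpl. split; [|split; [|split]]; auto.
    + intros v k. cbn [ms_X]. specialize (I3 v k). lia.
    + intros p' E. injection E as <-. simpl. split; [|split]; auto.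
      apply Nat.eqb_neq in He. lia.
Qed.

Lemma Inv_MS h : Inv (MS h) (length h).
Proof.
  induction h as [|x h IH] using rev_ind.
  - simpl. split; [|split; [|split]]; simpl; auto; try (intros; lia). intros p E; discriminate.
  - destruct x as [[a o] r]. rewrite MS_snoc, length_app. simpl.
    replace (length h + 1)%nat with (S (length h)) by lia.
    apply Inv_update. apply Inv_decide. auto.
Qed.

Local Notation del1 := (delta1 gamma envs eps delta).
Definition nj (j : nat) : nat := Z.to_nat (alpha_j envs j).
Definition tn (n : nat) : R := sqrt (2 * INR n * ln (INR n / del1)).
Definition lamn (n : nat) : R := tn n / INR n.
Definition cn (n : nat) : R := - lamn n * tn n + lamn n ^ 2 * INR n / 2.
Definition sumR (l : list R) : R := sumL l (fun x => x).
Definition inv_ph (p : phase) (k : nat) : bool :=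
  (Nat.eqb (ph_kap p) k && (Nat.eqb (ph_hi p) m || Nat.eqb (ph_lo p) m))%bool.
Definition sgp (p : phase) : R := if Nat.eqb (ph_hi p) m then 1 else -1.
Definition Vp (p : phase) : R := if Nat.eqb (ph_hi p) m then ph_Vhi p else ph_Vlo p.
Definition base (k n : nat) (s : mstate) : R :=
  exp (lamn n * sumR (firstn n (ms_X s m k)) - lamn n ^ 2 * INR (Nat.min (length (ms_X s m k)) n) / 2 + cn n).
Definition phi (k n : nat) (s : mstate) (h : @hist A Ob Rw) : R :=
  match ms_ph s with
  | Some p =>
      if (Nat.ltb (length (ms_X s m k)) n && inv_ph p k)%bool then
        exp (lamn n * sumR (ms_X s m k) - lamn n ^ 2 * INR (S (length (ms_X s m k))) / 2 + cn n) *
        W eO eR rv gamma mu (ps (ph_k p)) (sgp p) (Vp p) (lamn n) h (d - ph_step p) (ph_step p) (ph_ret p)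
      else base k n s
  | None => base k n s
  end.

Lemma lamn_nonneg n : (1 <= n)%nat -> 0 <= lamn n.
Proof.
  intros hn. unfold lamn. apply Rmult_le_pos. apply sqrt_pos.
  apply Rlt_le, Rinv_0_lt_compat. apply lt_0_INR. lia.
Qed.

Lemma phi_nonneg k n s h : 0 <= phi k n s h.
Proof.
  unfold phi, base. destruct (ms_ph s) as [p|].
  - destruct (_ && _)%bool. apply Rmult_le_pos. apply Rlt_le, exp_pos. apply W_nonneg; auto.
    apply Rlt_le, exp_pos.
  - apply Rlt_le, exp_pos.
Qed.

Lemma sumR_app l x : sumR (l ++ [x]) = sumR l + x.
Proof. unfold sumR. induction l; simpl. ring. rewrite IHl. ring. Qed.

Lemma decide_le k n s N h : Inv s N -> (1 <= n)%nat -> phi k n (snd (DEC s h)) h <= phi k n s h.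
Proof.
  intros HI hn. unfold decide. destruct (ms_ph s) as [p|] eqn:Hp.
  { simpl. lra. }
  destruct (sel h (ms_M s)) as [[i j] kk].
  destruct (Rlt_dec (eps / 4) (DeltaV eO eR rv gamma envs ps eps h i j kk)) as [Hl|Hl].
  2: { simpl. lra. }
  unfold phi. cbn [snd ms_ph ms_X]. rewrite Hp.
  destruct (Nat.ltb (length (ms_X s m k)) n && inv_ph _ k)%bool eqn:Hc.
  2: { unfold base. cbn [ms_X]. lra. }
  apply Bool.andb_true_iff in Hc as [Hc1 Hc2]. apply Nat.ltb_lt in Hc1.
  unfold inv_ph in Hc2. cbn [ph_kap ph_hi ph_lo] in Hc2.
  apply Bool.andb_true_iff in Hc2 as [_ Hc2].
  assert (HV : Vp (mkPhase kk i j (kappa_of gamma eps (DeltaV eO eR rv gamma envs ps eps h i j kk))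
            (Vd eO eR rv gamma (nuI envs i) (ps kk) h d) (Vd eO eR rv gamma (nuI envs j) (ps kk) h d) 0 0)
            = Vd eO eR rv gamma mu (ps kk) h d).
  { unfold Vp. cbn [ph_hi ph_Vhi ph_Vlo]. destruct (Nat.eqb_spec i m) as [->|Hi]. reflexivity.
    apply Bool.orb_true_iff in Hc2 as [H|H]. discriminate.
    apply Nat.eqb_eq in H. subst. reflexivity. }
  cbn [ph_k ph_step ph_ret]. rewrite Nat.sub_0_r.
  set (p0 := mkPhase _ _ _ _ _ _ _ _). fold p0 in HV.
  assert (hl := lamn_nonneg n hn).
  assert (HW : W eO eR rv gamma mu (ps kk) (sgp p0) (Vp p0) (lamn n) h d 0 0 <= exp (lamn n ^ 2 / 2)).
  { eapply Rle_trans. apply W_bound; auto.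
    - unfold sgp. destruct (Nat.eqb _ _); auto.
    - rewrite HV. simpl. apply Vd_bounds; auto.
    - simpl. replace (1 - 1) with 0 by ring. unfold Rdiv. rewrite Rmult_0_l. lra.
    - rewrite HV. simpl. rewrite Rminus_0_r, Rmult_1_l.
      replace (Vd eO eR rv gamma mu (ps kk) h d - Vd eO eR rv gamma mu (ps kk) h d) with 0 by ring.
      rewrite !Rmult_0_r, Rplus_0_r. apply cosh_le; auto. }
  unfold base. rewrite firstn_all2 by lia. rewrite Nat.min_l by lia.
  set (a := lamn n * sumR (ms_X s m k)).
  replace (a - lamn n ^ 2 * INR (length (ms_X s m k)) / 2 + cn n)
    with ((a - lamn n ^ 2 * INR (S (length (ms_X s m k))) / 2 + cn n) + lamn n ^ 2 / 2)
    by (rewrite S_INR; field).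
  rewrite (exp_plus (a - lamn n ^ 2 * INR (S (length (ms_X s m k))) / 2 + cn n)). apply Rmult_le_compat_l. apply Rlt_le, exp_pos. exact HW.
Qed.

Lemma addX2_eq X p xh xl k : ph_hi p <> ph_lo p ->
  addX (addX X (ph_hi p) (ph_kap p) xh) (ph_lo p) (ph_kap p) xl m k =
  if inv_ph p k then X m k ++ [if Nat.eqb (ph_hi p) m then xh else xl] else X m k.
Proof.
  intros Hne. unfold addX, inv_ph.
  destruct (Nat.eqb_spec m (ph_hi p)), (Nat.eqb_spec m (ph_lo p)), (Nat.eqb_spec k (ph_kap p)),
    (Nat.eqb_spec (ph_kap p) k), (Nat.eqb_spec (ph_hi p) m), (Nat.eqb_spec (ph_lo p) m);
    simpl; try congruence; try reflexivity; exfalso; congruence.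
Qed.

Lemma E2_scale h a F c : E2 eO eR mu h a (fun o r => c * F o r) = c * E2 eO eR mu h a F.
Proof.
  rewrite (E2_ext _ _ _ _ _ _ (fun o r => 0 + c * F o r)) by (intros; ring).
  rewrite E2_affine by auto. ring.
Qed.

Lemma update_le k n s1 N h a : Inv s1 N -> (1 <= n)%nat ->
  (forall p, ms_ph s1 = Some p -> a = ps (ph_k p) h) ->
  E2 eO eR mu h a (fun o r => phi k n (UPD s1 r) (h ++ [(a, o, r)])) <= phi k n s1 h.
Proof.
  intros HI hn Ha. unfold update. cbv zeta.
  destruct (ms_ph s1) as [p|] eqn:Hp.
  2: { unfold phi. rewrite Hp. rewrite E2_const by auto. lra. }
  destruct (proj2 (proj2 (proj2 HI)) p Hp) as [J1 [J2 J3]].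
  specialize (Ha p eq_refl). subst a.
  destruct (Nat.eqb (S (ph_step p)) d) eqn:He.
  -
    apply Nat.eqb_eq in He.
    unfold phi at 2. rewrite Hp.
    destruct (Nat.ltb (length (ms_X s1 m k)) n && inv_ph p k)%bool eqn:Hc.
    + apply Bool.andb_true_iff in Hc as [Hc1 Hc2]. apply Nat.ltb_lt in Hc1.
      replace (d - ph_step p)%nat with 1%nat by lia. cbn [W].
      rewrite <- E2_scale. apply Req_le. apply E2_ext. intros o r.
      unfold phi. cbn [ms_ph ms_X]. unfold base. cbn [ms_X].
      rewrite addX2_eq by auto. rewrite Hc2.
      rewrite firstn_all2 by (rewrite length_app; simpl; lia).
      rewrite length_app. simpl length. rewrite Nat.min_l by lia.
      rewrite sumR_app. rewrite <- exp_plus. f_equal.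
      unfold sgp, Vp. rewrite S_INR, plus_INR. simpl INR.
      destruct (Nat.eqb (ph_hi p) m); field.
    + rewrite <- (E2_const eO eR mu h (ps (ph_k p) h) (base k n s1)) by auto.
      apply Req_le. apply E2_ext. intros o r.
      unfold phi. cbn [ms_ph ms_X]. unfold base. cbn [ms_X].
      rewrite addX2_eq by auto.
      destruct (inv_ph p k) eqn:Hi; [|reflexivity].
      rewrite Bool.andb_true_r in Hc. apply Nat.ltb_ge in Hc.
      rewrite firstn_app. replace (n - length (ms_X s1 m k))%nat with 0%nat by lia.
      simpl firstn. rewrite app_nil_r. rewrite length_app. simpl length.
      rewrite !Nat.min_r by lia. reflexivity.
  -
    apply Nat.eqb_neq in He.
    unfold phi. cbn [ms_ph ms_X]. rewrite Hp.
    unfold inv_ph, sgp, Vp. cbn [ph_kap ph_hi ph_lo ph_k ph_Vhi ph_Vlo ph_step ph_ret].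
    destruct (Nat.ltb (length (ms_X s1 m k)) n &&
              (Nat.eqb (ph_kap p) k && (Nat.eqb (ph_hi p) m || Nat.eqb (ph_lo p) m)))%bool eqn:Hc.
    + rewrite E2_scale. apply Req_le. f_equal.
      replace (d - ph_step p)%nat with (S (d - S (ph_step p))) by lia.
      reflexivity.
    + unfold base. cbn [ms_X]. rewrite E2_const by auto. lra.
Qed.

Definition Phi (J : nat) (s : mstate) (h : @hist A Ob Rw) : R :=
  sumL (seq 0 (S Kc)) (fun k => sumL (seq 0 (S J)) (fun j => phi k (nj j) s h)).
Definition Psi (J : nat) (h : @hist A Ob Rw) : R := Phi J (MS h) h.

Lemma Phi_nonneg J s h : 0 <= Phi J s h.
Proof. apply sumL_nonneg; intros; apply sumL_nonneg; intros; apply phi_nonneg. Qed.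

Lemma N_ge1 : 1 <= INR (length envs).
Proof. replace 1 with (INR 1) by reflexivity. apply le_INR. lia. Qed.

Lemma sqrtN_ge1 : 1 <= sqrt (INR (length envs)).
Proof. rewrite <- sqrt_1. apply sqrt_le_1. lra. apply pos_INR. apply N_ge1. Qed.

Lemma alpha_gt1 : 1 < alpha envs.
Proof.
  unfold alpha, Nenv. pose proof sqrtN_ge1.
  set (a := sqrt (INR (length envs))) in *.
  apply Rmult_lt_reg_r with (4 * a - 1). lra.
  unfold Rdiv. rewrite Rmult_assoc, Rinv_l by lra. lra.
Qed.

Lemma alphaj_ge1 j : (1 <= alpha_j envs j)%Z.
Proof.
  unfold alpha_j. apply Rceil_pos. apply pow_lt. pose proof alpha_gt1. lra.
Qed.

Lemma nj_pos j : (1 <= nj j)%nat.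
Proof. unfold nj. pose proof (alphaj_ge1 j). lia. Qed.

Lemma nj_ge j : alpha envs ^ j <= INR (nj j).
Proof.
  unfold nj. rewrite INR_IZR_INZ. rewrite Z2Nat.id by (pose proof (alphaj_ge1 j); lia).
  apply Rceil_ge.
Qed.

Lemma E2_plus h a F G : E2 eO eR mu h a (fun o r => F o r + G o r) = E2 eO eR mu h a F + E2 eO eR mu h a G.
Proof.
  unfold E2. rewrite <- sumL_plus. apply sumL_ext; intros o _. rewrite <- sumL_plus.
  apply sumL_ext; intros r _. ring.
Qed.

Lemma E2_sumL {X : Type} (l : list X) h a F :
  E2 eO eR mu h a (fun o r => sumL l (fun x => F x o r)) = sumL l (fun x => E2 eO eR mu h a (F x)).
Proof.
  induction l as [|x l IH]; simpl.
  - apply E2_const; auto.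
  - rewrite E2_plus. rewrite IH. reflexivity.
Qed.

Lemma dec_action s h p : ms_ph (snd (DEC s h)) = Some p -> fst (DEC s h) = ps (ph_k p) h.
Proof.
  unfold decide. destruct (ms_ph s) as [p0|] eqn:Hp.
  - simpl. rewrite Hp. intros E. injection E as <-. reflexivity.
  - destruct (sel h (ms_M s)) as [[i j] kk].
    destruct (Rlt_dec _ _); simpl.
    + intros E. injection E as <-. reflexivity.
    + rewrite Hp. discriminate.
Qed.

Lemma dec_M s h : ms_M (snd (DEC s h)) = ms_M s.
Proof.
  unfold decide. destruct (ms_ph s). reflexivity.
  destruct (sel h (ms_M s)) as [[i j] kk]. destruct (Rlt_dec _ _); reflexivity.
Qed.

Lemma Psi_super J h :
  E2 eO eR mu h (merl_policy eO eR rv gamma envs ps eps delta sel h)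
     (fun o r => Psi J (h ++ [(merl_policy eO eR rv gamma envs ps eps delta sel h, o, r)]))
  <= Psi J h.
Proof.
  change (merl_policy eO eR rv gamma envs ps eps delta sel h) with (fst (DEC (MS h) h)).
  pose proof (Inv_MS h) as HI.
  pose proof (Inv_decide _ _ h HI) as HI1.
  pose proof (dec_action (MS h) h) as Hact.
  set (s1 := snd (DEC (MS h) h)) in *. set (a := fst (DEC (MS h) h)) in *.
  unfold Psi.
  rewrite (E2_ext _ _ _ _ _ _ (fun o r => Phi J (UPD s1 r) (h ++ [(a, o, r)]))).
  2: { intros o r. unfold Psi. rewrite MS_snoc. reflexivity. }
  apply Rle_trans with (Phi J s1 h).
  - unfold Phi. rewrite E2_sumL. apply sumL_le; intros k _.
    rewrite E2_sumL. apply sumL_le; intros j _.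
    eapply update_le; eauto. apply nj_pos.
  - unfold Phi. apply sumL_le; intros k _. apply sumL_le; intros j _.
    eapply decide_le; eauto. apply nj_pos.
Qed.

Lemma existsb_filter (l : list nat) f :
  existsb (Nat.eqb m) l = true -> existsb (Nat.eqb m) (filter f l) = false -> f m = false.
Proof.
  induction l as [|x l IH]; simpl. discriminate.
  destruct (Nat.eqb_spec m x) as [->|Hx].
  - destruct (f x) eqn:Fx; simpl; auto. rewrite Nat.eqb_refl. discriminate.
  - simpl. intros H1. destruct (f x); simpl; auto.
    apply Nat.eqb_neq in Hx. rewrite Hx. simpl. auto.
Qed.

Lemma removed h x :
  in_M eO eR rv gamma envs ps eps delta sel m h = true ->
  in_M eO eR rv gamma envs ps eps delta sel m (h ++ [x]) = false ->
  ms_ph (MS (h ++ [x])) = None /\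
  remove_cond gamma envs eps delta (ms_E (MS (h ++ [x]))) (ms_X (MS (h ++ [x]))) m = true.
Proof.
  destruct x as [[a o] r]. unfold in_M. rewrite MS_snoc.
  pose proof (dec_M (MS h) h) as HM.
  set (s1 := snd (DEC (MS h) h)) in *. rewrite <- HM.
  unfold update. cbv zeta.
  destruct (ms_ph s1) as [p|] eqn:Hp.
  2: { intros H1 H2. congruence. }
  destruct (Nat.eqb (S (ph_step p)) d).
  - cbn [ms_M ms_ph ms_E ms_X]. intros H1 H2. split; auto.
    pose proof (existsb_filter _ _ H1 H2) as H. simpl in H.
    destruct (remove_cond _ _ _ _ _ _ m); auto.
  - cbn [ms_M]. intros H1 H2. congruence.
Qed.

Lemma exp_ge1 x : 0 <= x -> 1 <= exp x.
Proof.
  intros H. destruct (Req_dec x 0) as [->|Hx]. rewrite exp_0. lra.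
  rewrite <- exp_0. apply Rlt_le, exp_increasing. lra.
Qed.

Lemma trigger J t h x : 2 * INR t < alpha envs ^ S J -> (length (h ++ [x]) <= t)%nat ->
  in_M eO eR rv gamma envs ps eps delta sel m h = true ->
  in_M eO eR rv gamma envs ps eps delta sel m (h ++ [x]) = false ->
  1 <= Psi J (h ++ [x]).
Proof.
  intros HJ Hl H1 H2.
  destruct (removed h x H1 H2) as [Hph Hrc].
  set (h' := h ++ [x]) in *.
  destruct (Inv_MS h') as [I1 [I2 [I3 _]]].
  unfold remove_cond in Hrc.
  destruct (excluded_middle_informative _) as [[kap [j [Hj Hs]]]|]; [|discriminate].
  rewrite I1 in Hj, Hs.
  set (l := ms_X (MS h') m kap) in *.
  assert (Hn : nj j = length l) by (unfold nj; rewrite <- Hj; apply Nat2Z.id).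
  pose proof (nj_pos j) as Hpos.
  assert (Hk : (kap <= Kc)%nat) by (apply (I2 m); fold l; lia).
  assert (Hjj : (j <= J)%nat).
  { destruct (le_lt_dec j J) as [|Hlt]; auto. exfalso.
    pose proof (Rle_pow (alpha envs) (S J) j ltac:(pose proof alpha_gt1; lra) Hlt) as Ha1.
    pose proof (nj_ge j) as Ha2. rewrite Hn in Ha2.
    assert (INR (length l) <= 2 * INR t).
    { replace 2 with (INR 2) by reflexivity. rewrite <- mult_INR. apply le_INR.
      specialize (I3 m kap). fold l in I3. lia. }
    lra. }
  unfold Psi. apply Rle_trans with (phi kap (nj j) (MS h') h').
  2: { unfold Phi. eapply Rle_trans.
       2: { apply (sumL_ge_term (seq 0 (S Kc)) (fun k => sumL (seq 0 (S J)) (fun j0 => phi k (nj j0) (MS h') h')) kap).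
            intros; apply sumL_nonneg; intros; apply phi_nonneg.
            apply in_seq. split; lia. }
       apply (sumL_ge_term (seq 0 (S J)) (fun j0 => phi kap (nj j0) (MS h') h') j).
       intros; apply phi_nonneg. apply in_seq. split; lia. }
  unfold phi. rewrite Hph. unfold base. fold l. rewrite Hn.
  rewrite firstn_all, Nat.min_id. apply exp_ge1.
  unfold cn. rewrite <- Hn.
  assert (0 <= lamn (nj j)) by (apply lamn_nonneg; auto).
  assert (tn (nj j) <= sumR l) by (unfold tn, sumR; rewrite Hn; exact Hs).
  nra.
Qed.


Lemma Kc_ge3 : 3 <= INR Kc.
Proof. unfold Kcard. rewrite plus_INR. simpl INR. pose proof (pos_INR (Z.to_nat (Rceil (log2 (/ (eps * (1 - gamma))))))). lra. Qed.

Lemma del1_bounds : 0 < del1 < 1.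
Proof.
  unfold delta1, Nenv. pose proof Kc_ge3. pose proof N_ge1. pose proof sqrtN_ge1.
  set (K := INR Kc) in *. set (N := INR (length envs)) in *. set (s := sqrt N) in *.
  assert (1 <= N * s) by nra.
  assert (96 <= 32 * K * (N * s)) by nra.
  split.
  - apply Rdiv_lt_0_compat; lra.
  - apply Rmult_lt_reg_r with (32 * K * (N * s)). lra.
    unfold Rdiv. rewrite Rmult_assoc, Rinv_l by lra. lra.
Qed.

Lemma exp_cn n : (1 <= n)%nat -> exp (cn n) = del1 / INR n.
Proof.
  intros hn. pose proof del1_bounds.
  assert (hx : 1 <= INR n) by (replace 1 with (INR 1) by reflexivity; apply le_INR; lia).
  set (x := INR n) in *.
  assert (hy : 1 <= x / del1).
  { apply Rmult_le_reg_r with del1. lra. unfold Rdiv. rewrite Rmult_assoc, Rinv_l by lra. lra. }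
  assert (hL : 0 <= ln (x / del1)).
  { destruct (Req_dec (x / del1) 1) as [->|Hne]. rewrite ln_1; lra.
    rewrite <- ln_1. left. apply ln_increasing; lra. }
  assert (Hsq : tn n * tn n = 2 * x * ln (x / del1)).
  { unfold tn. fold x. apply sqrt_sqrt. nra. }
  assert (Hc : cn n = - ln (x / del1)).
  { unfold cn, lamn. fold x.
    replace (- (tn n / x) * tn n + (tn n / x) ^ 2 * x / 2) with (- (tn n * tn n) / (2 * x)) by (field; lra).
    rewrite Hsq. field. lra. }
  rewrite Hc, exp_Ropp, exp_ln by lra. field. lra.
Qed.

Lemma geo_sum q a n : sumL (seq a n) (fun j => q ^ j) * (1 - q) = q ^ a - q ^ (a + n).
Proof.
  revert a. induction n; intros a; simpl.
  - rewrite Nat.add_0_r. ring.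
  - replace (a + S n)%nat with (S a + n)%nat by lia.
    rewrite Rmult_plus_distr_r, IHn. simpl. ring.
Qed.

Lemma sumL_seq_const a n c : sumL (seq a n) (fun _ => c) = INR n * c.
Proof. revert a. induction n; intros a. simpl. ring. rewrite S_INR. simpl. rewrite IHn. ring. Qed.

Lemma root_bound J : Psi J [] <= delta / 4.
Proof.
  pose proof del1_bounds as Hd.
  pose proof alpha_gt1 as Ha.
  set (q := / alpha envs).
  assert (hq : 0 < q < 1).
  { unfold q. split. apply Rinv_0_lt_compat; lra. rewrite <- Rinv_1. apply Rinv_lt_contravar; lra. }
  assert (Hgeo : sumL (seq 0 (S J)) (fun j => q ^ j) <= / (1 - q)).
  { pose proof (geo_sum q 0 (S J)) as G. change (q ^ 0 - q ^ (0 + S J)) with (1 - q ^ (S J)) in G.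
    assert (0 < q ^ (S J)) by (apply pow_lt; lra).
    apply Rmult_le_reg_r with (1 - q). lra. rewrite Rinv_l by lra. lra. }
  assert (Hterm : forall k j, phi k (nj j) (init_state envs) [] <= del1 * q ^ j).
  { intros k j. unfold phi, base. cbn [ms_ph ms_X]. rewrite firstn_nil. simpl length.
    rewrite Nat.min_0_l. unfold sumR. simpl sumL. simpl INR.
    replace (lamn (nj j) * 0 - lamn (nj j) ^ 2 * 0 / 2 + cn (nj j)) with (cn (nj j)) by field.
    rewrite exp_cn by apply nj_pos. unfold q. rewrite pow_inv.
    pose proof (nj_ge j). assert (0 < alpha envs ^ j) by (apply pow_lt; lra).
    unfold Rdiv. apply Rmult_le_compat_l. lra. apply Rinv_le_contravar; lra. }
  unfold Psi, Phi. change (MS []) with (init_state envs).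
  eapply Rle_trans.
  { apply sumL_le; intros k _. eapply Rle_trans.
    { apply sumL_le; intros j _. apply Hterm. }
    rewrite sumL_scal. apply Rmult_le_compat_l. lra. exact Hgeo. }
  rewrite sumL_seq_const.
  assert (Hinv : / (1 - q) = 4 * sqrt (INR (length envs))).
  { unfold q, alpha, Nenv. pose proof sqrtN_ge1. field. split; lra. }
  rewrite Hinv. unfold delta1, Nenv.
  pose proof Kc_ge3. pose proof N_ge1. pose proof sqrtN_ge1.
  set (K := INR Kc) in *. set (N := INR (length envs)) in *. set (s := sqrt N) in *.
  rewrite S_INR. fold K.
  replace ((K + 1) * (delta / (32 * K * (N * s)) * (4 * s))) with (delta / 4 * ((K + 1) / (2 * K * N)))
    by (field; repeat split; lra).
  assert ((K + 1) / (2 * K * N) <= 1).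
  { apply Rmult_le_reg_r with (2 * K * N). nra. unfold Rdiv. rewrite Rmult_assoc, Rinv_l by nra. nra. }
  assert (0 < delta / 4) by lra. nra.
Qed.

Lemma Pstay_S mu' h n :
  Pstay eO eR rv gamma envs ps eps delta sel mu' m h (S n) =
  if in_M eO eR rv gamma envs ps eps delta sel m h then
    E2 eO eR mu' h (merl_policy eO eR rv gamma envs ps eps delta sel h)
      (fun o r => Pstay eO eR rv gamma envs ps eps delta sel mu' m
         (h ++ [(merl_policy eO eR rv gamma envs ps eps delta sel h, o, r)]) n)
  else 0.
Proof. reflexivity. Qed.

Lemma Pstay_0 mu' h :
  Pstay eO eR rv gamma envs ps eps delta sel mu' m h 0 =
  if in_M eO eR rv gamma envs ps eps delta sel m h then 1 else 0.
Proof. reflexivity. Qed.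

Lemma main_ind J t : 2 * INR t < alpha envs ^ S J -> forall n h, (length h + n <= t)%nat ->
  (in_M eO eR rv gamma envs ps eps delta sel m h = false -> 1 <= Psi J h) ->
  1 - Psi J h <= Pstay eO eR rv gamma envs ps eps delta sel mu m h n.
Proof.
  intros HJ n. induction n as [|n IH]; intros h Hl Hin.
  - rewrite Pstay_0. destruct (in_M _ _ _ _ _ _ _ _ _ m h) eqn:Hm.
    + pose proof (Phi_nonneg J (MS h) h). unfold Psi. lra.
    + specialize (Hin eq_refl). lra.
  - rewrite Pstay_S. destruct (in_M _ _ _ _ _ _ _ _ _ m h) eqn:Hm.
    2: { specialize (Hin eq_refl). lra. }
    set (a := merl_policy eO eR rv gamma envs ps eps delta sel h).
    apply Rle_trans with (E2 eO eR mu h a (fun o r => 1 + (-1) * Psi J (h ++ [(a, o, r)]))).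
    + rewrite E2_affine by auto. pose proof (Psi_super J h). fold a in H. lra.
    + apply E2_le; auto. intros o r.
      replace (1 + -1 * Psi J (h ++ [(a, o, r)])) with (1 - Psi J (h ++ [(a, o, r)])) by ring.
      apply IH.
      * rewrite length_app. simpl. lia.
      * intros Hf. apply (trigger J t); auto. rewrite length_app. simpl. lia.
Qed.

Lemma final_sec t : 1 - delta / 4 <= Pstay eO eR rv gamma envs ps eps delta sel mu m [] t.
Proof.
  assert (Hr : Rabs (alpha envs) > 1) by (pose proof alpha_gt1; rewrite Rabs_right; lra).
  destruct (Pow_x_infinity _ Hr (2 * INR t + 1)) as [N0 HN].
  specialize (HN (S N0) ltac:(lia)).
  rewrite Rabs_right in HN by (apply Rle_ge, pow_le; pose proof alpha_gt1; lra).
  pose proof (main_ind N0 t ltac:(lra) t [] ltac:(simpl; lia)) as H.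
  assert (Hin : in_M eO eR rv gamma envs ps eps delta sel m [] = true).
  { unfold in_M. change (MS []) with (init_state envs). simpl.
    apply existsb_exists. exists m. split. apply in_seq. unfold Nenv. lia. apply Nat.eqb_refl. }
  specialize (H ltac:(rewrite Hin; discriminate)).
  pose proof (root_bound N0). lra.
Qed.

End Merl.
Theorem lemma2
  (A O Rw : Type) (eA : list A) (eO : list O) (eR : list Rw) (rv : Rw -> R)
  (hA : NoDup eA /\ forall a : A, In a eA)
  (hO : NoDup eO /\ forall o : O, In o eO)
  (hR : NoDup eR /\ forall r : Rw, In r eR)
  (hrv : (forall r : Rw, 0 <= rv r <= 1) /\
         (forall r1 r2 : Rw, rv r1 = rv r2 -> r1 = r2))
  (gamma eps delta : R)
  (hgamma : 0 < gamma < 1) (heps : 0 < eps <= 1) (hdelta : 0 < delta < 1)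
  (envs : list (@env A O Rw))
  (henvs : forall i, (i < length envs)%nat -> is_env eO eR (nuI envs i))
  (hdist : forall i j, (i < length envs)%nat -> (j < length envs)%nat ->
             nuI envs i = nuI envs j -> i = j)
  (ps : nat -> @policy A O Rw)
  (hopt : forall i, (i < length envs)%nat ->
            is_optimal eO eR rv gamma (nuI envs i) (ps i))
  (sel : @hist A O Rw -> list nat -> nat * nat * nat)
  (hsel : forall h Sl, Sl <> [] ->
     let '(i, j, k) := sel h Sl in
     In i Sl /\ In j Sl /\ In k Sl /\
     forall i' j' k', In i' Sl -> In j' Sl -> In k' Sl ->
       DeltaV eO eR rv gamma envs ps eps h i' j' k'
         <= DeltaV eO eR rv gamma envs ps eps h i j k)
  (m : nat) (hm : (m < length envs)%nat) :
  forall t : nat,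
    1 - delta / 4 <=
    Pstay eO eR rv gamma envs ps eps delta sel (nuI envs m) m [] t.

Proof.
  intros t. apply final_sec; try assumption.
  - exact (proj1 hrv).
  - exact (henvs m hm).
Qed.
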